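(* Let $\mu:\mathbb{R}^{n\times n}\to\mathbb{R}$ be the matrix measure induced by an orthant-monotonic norm on $\mathbb{R}^n$, and let $A\in\mathbb{R}^{n\times n}$. If $\mu(A)<0$, then every diagonal entry $a_{ii}$ of $A$ is negative.
   Context: For a vector norm $|\cdot|$ on $\mathbb{R}^n$, the induced matrix norm is $\|A\|=\max_{|x|=1}|Ax|$ and the induced matrix measure is $\mu(A)=\lim_{\varepsilon\to0^+}(\|I_n+\varepsilon A\|-1)/\varepsilon$. A norm $|\cdot|$ on $\mathbb{R}^n$ is orthant-monotonic if for all $x,y\in\mathbb{R}^n$: whenever $x_iy_i\ge 0$ and $|x_i|\le|y_i|$ for all $i$, then $|x|\le|y|$. *)

(* Defs.v *)
From HB Require Import structures.
From mathcomp Require Import all_boot all_order all_algebra.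
From mathcomp Require Import all_classical all_reals all_analysis.
Set Implicit Arguments. Unset Strict Implicit. Unset Printing Implicit Defensive.
Import Order.TTheory GRing.Theory Num.Theory.
Import numFieldNormedType.Exports.
Local Open Scope classical_set_scope.
Local Open Scope ring_scope.

Definition is_vnorm (R : realType) (n : nat) (N : 'cV[R]_n -> R) : Prop :=
  (forall x, 0 <= N x) /\
  (forall x, N x = 0 -> x = 0) /\
  (forall (a : R) x, N (a *: x) = `|a| * N x) /\
  (forall x y, N (x + y) <= N x + N y).

Definition orthant_monotonic (R : realType) (n : nat) (N : 'cV[R]_n -> R) : Prop :=
  forall x y : 'cV[R]_n,
    (forall i, 0 <= x i 0 * y i 0 /\ `|x i 0| <= `|y i 0|) -> N x <= N y.

Definition induced_norm (R : realType) (n : nat) (N : 'cV[R]_n -> R)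
  (A : 'M[R]_n) : R :=
  sup [set N (A *m x) | x in [set x | N x = 1]].

Definition matrix_measure (R : realType) (n : nat) (N : 'cV[R]_n -> R)
  (A : 'M[R]_n) : R :=
  lim ((fun e : R => (induced_norm N (1%:M + e *: A) - 1) / e) @ 0^'+).

(* Main.v *)
Require Import Defs.
From HB Require Import structures.
From mathcomp Require Import all_boot all_order all_algebra.
From mathcomp Require Import all_classical all_reals all_analysis.
Import Order.TTheory GRing.Theory Num.Theory.
Import numFieldNormedType.Exports.
Local Open Scope classical_set_scope.
Local Open Scope ring_scope.

Section Helpers.
Variables (R : realType) (n : nat) (N : 'cV[R]_n -> R).
Hypothesis hN : is_vnorm N.
Hypothesis hO : orthant_monotonic N.

Lemma N0 : N 0 = 0.
Proof.
case: hN => _ [_ [hs _]].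
by rewrite -(scale0r (0 : 'cV[R]_n)) hs normr0 mul0r.
Qed.

Lemma Nrestr (x : 'cV[R]_n) j : N (x j 0 *: delta_mx j 0) <= N x.
Proof.
apply: hO => k; rewrite !mxE.
have -> : (0 : 'I_1) = ord0 by apply/val_inj.
rewrite eqxx andbT.
case: eqP => [->|_]; rewrite ?mulr1 ?mulr0 ?mul0r.
  by rewrite -expr2 sqr_ge0 lexx.
by rewrite normr0 normr_ge0 lexx.
Qed.

Lemma Ndelta_gt0 j : 0 < N (delta_mx j 0 : 'cV[R]_n).
Proof.
case: hN => h0 [hd _]; rewrite lt_def h0 andbT.
apply/eqP => /hd /matrixP /(_ j 0); rewrite !mxE !eqxx /= => /eqP.
by rewrite oner_eq0.
Qed.

Lemma Nsum (m : nat) (F : 'I_m -> 'cV[R]_n) :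
  N (\sum_(j < m) F j) <= \sum_(j < m) N (F j).
Proof.
apply: (big_rec2 (fun a b => N a <= b)); first by rewrite N0.
move=> j a b _ hab; case: hN => _ [_ [_ ht]].
by apply: le_trans (ht _ _) _; rewrite lerD2l.
Qed.

Lemma bounded (M : 'M[R]_n) :
  has_ubound [set N (M *m x) | x in [set x | N x = 1]].
Proof.
exists (\sum_(j < n) N (M *m delta_mx j 0) / N (delta_mx j 0)).
move=> _ [x /= Nx1 <-].
have hx : x = \sum_(j < n) x j 0 *: delta_mx j 0.
  rewrite {1}(matrix_sum_delta x); apply: eq_bigr => j _.
  by rewrite big_ord1.
rewrite hx mulmx_sumr.

apply: le_trans (Nsum _ _) _; apply: ler_sum => j _.
case: hN => _ [_ [hs _]].
rewrite -scalemxAr hs mulrC; apply: ler_wpM2l; first by case: hN.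
rewrite -(div1r (N _)) ler_pdivlMr ?Ndelta_gt0 // -Nx1 -hs; exact: Nrestr.
Qed.
End Helpers.

Theorem proposition2 (R : realType) (n : nat) (N : 'cV[R]_n -> R)
  (A : 'M[R]_n) :
  is_vnorm N -> orthant_monotonic N -> matrix_measure N A < 0 ->
  forall i : 'I_n, A i i < 0.
Proof.
move=> hN hO hmu i; rewrite ltNge; apply/negP => hA.
move: hmu; apply/negP; rewrite -leNgt.
set c := (N (delta_mx i 0))^-1.
have hc : 0 < c by rewrite invr_gt0 Ndelta_gt0.
have key : forall e : R, 0 < e -> 1 <= induced_norm N (1%:M + e *: A).
  move=> e e0; rewrite /induced_norm.
  set M := 1%:M + e *: A.
  set u : 'cV[R]_n := c *: delta_mx i 0.
  case: (hN) => _ [_ [hs _]].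
  have Nu : N u = 1 by rewrite hs gtr0_norm // mulVf // gt_eqF // Ndelta_gt0.
  have hub : N (M *m u) <= sup [set N (M *m x) | x in [set x | N x = 1]].
    by apply: ub_le_sup; [exact: bounded | exists u].
  apply: le_trans hub.
  have hy : (M *m u) i 0 = c * (1 + e * A i i).
    rewrite -scalemxAr -colE !mxE eqxx /= mulrC.
    by [].
  apply: le_trans (@Nrestr _ _ N hO (M *m u) i).
  rewrite hs hy ger0_norm; last first.
    apply: mulr_ge0; [exact: ltW | apply: addr_ge0 => //; apply: mulr_ge0 => //; exact: ltW].
  rewrite mulrAC mulVf ?gt_eqF ?Ndelta_gt0 // mul1r lerDl; apply: mulr_ge0 => //; exact: ltW.
rewrite /matrix_measure.
set F := (X in lim X).
have [cv|ncv] := pselect (cvg F).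
  apply: limr_ge => //.
  near=> e.
  have e0 : 0 < e by near: e; exact: nbhs_right_gt.
  by rewrite divr_ge0 ?subr_ge0 ?key // ltW.
by rewrite dvgP.
Unshelve. all: by end_near.
Qed.
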